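(* If $\mathcal U\in\mathcal M_*$ and $\mathcal V\in\mathcal M_{\le\omega}$, then $\mathcal U\cdot\mathcal V:=\{(AC,D)\mid A\in\mathcal U,\ (C,D)\in\mathcal V\}$ belongs to $\mathcal M_{\le\omega}$ (i.e. is a closed subset of $\mathcal C$).
   Context: $\Sigma$ is a finite alphabet, $\Sigma^{\le\omega}=\Sigma^*\cup\Sigma^\omega$; concatenation $w\cdot u$ equals $wu$ if $w$ is finite and $w$ if $w$ is infinite, extended pointwise to languages. For $A\subseteq\Sigma^*$, $A^\omega$ is the set of all words $w_0w_1w_2\cdots$ with $w_i\in A$, and $CD^\omega$ means $C\cdot D^\omega$. Fix an extended Büchi automaton $\mathfrak A=(Q,\Sigma,\delta,q_0,F)$ (finite states, $\delta:Q\times\Sigma\to\mathcal P(Q)$, initial $q_0$, final $F$). For $w\in\Sigma^*$ write $p\overset{w}{\leadsto}q$ if $q$ is reachable from $p$ reading $w$, and $p\overset{w}{\leadsto}_F q$ if there are $q''\in F$, $w=uv$ with $p\overset{u}{\leadsto}q''\overset{v}{\leadsto}q$. For $w,u\in\Sigma^+$, $w\sim u$ iff for all $p,q$: $p\overset{w}{\leadsto}q\Leftrightarrow p\overset{u}{\leadsto}q$ and $p\overset{w}{\leadsto}_Fq\Leftrightarrow p\overset{u}{\leadsto}_Fq$. $\mathcal Q=\Sigma^+/{\sim}\uplus\{[\epsilon]\}$ with $[\epsilon]=\{\epsilon\}$; concatenation of classes is well defined (monoid with unit $[\epsilon]$). Let $\mathcal C=\{(C,D)\mid C,D\in\mathcal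 Q,\ CD=C,\ DD=D\}$. Define $\mathfrak f(V)=\{(C,D)\in\mathcal C\mid CD^\omega\cap V\neq\emptyset\}$ and $\mathfrak g(\mathcal V)=\bigcup_{(C,D)\in\mathcal V}CD^\omega$. $\mathcal V\subseteq\mathcal C$ is closed if $\mathfrak f(\mathfrak g(\mathcal V))=\mathcal V$, i.e. whenever $(C,D)\in\mathcal V$, $(U,V)\in\mathcal C$ and $UV^\omega\cap CD^\omega\ne\emptyset$ then $(U,V)\in\mathcal V$; closure $\mathfrak c(\mathcal V)=\bigcup_{n\ge1}(\mathfrak f\circ\mathfrak g)^n(\mathcal V)$. $\mathcal M_{\le\omega}=\{\mathfrak c(\mathfrak f(V))\mid V\subseteq\Sigma^{\le\omega}\}$ (equivalently the closed subsets of $\mathcal C$) and $\mathcal M_*=\mathcal P(\mathcal Q)$. *)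

(* Defs.v *)
From mathcomp Require Import all_boot.
Set Implicit Arguments. Unset Strict Implicit. Unset Printing Implicit Defensive.

(* Extended Buchi automaton (Q, Sigma, delta, q0, F) over alphabet S. *)
Record aut (S : finType) := Aut {
  st : finType;
  delta : st -> S -> {set st};
  init : st;
  fin : {set st} }.

Section Defs.
Variables (S : finType) (A : aut S).

Inductive oword := Fin of seq S | Inf of (nat -> S).

Fixpoint reach (p : st A) (w : seq S) : {set st A} :=
  match w with
  | [::] => [set p]
  | a :: w' => \bigcup_(q in delta p a) reach q w'
  end.

Definition reachb (p : st A) (w : seq S) (q : st A) : bool := q \in reach p w.

Definition reachFb (p : st A) (w : seq S) (q : st A) : bool :=
  [exists i : 'I_(size w).+1, [exists q2 : st A,
     [&& q2 \in fin A, reachb p (take i w) q2 & reachb q2 (drop i w) q]]].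

Definition sim (w u : seq S) : Prop :=
  w <> [::] /\ u <> [::] /\
  forall p q : st A, (reachb p w q = reachb p u q) /\ (reachFb p w q = reachFb p u q).

Definition lang := seq S -> Prop.

Definition cls (w : seq S) : lang :=
  fun u => if w is [::] then u = [::] else sim w u.

Definition isClass (C : lang) : Prop := exists w, C = cls w.

Definition cmul (C D : lang) : lang :=
  fun x => exists u v, C u /\ D v /\ cls (u ++ v) x.

(* x is the (infinite) concatenation f 0 f 1 f 2 ... *)
Definition concat_rel (f : nat -> seq S) (x : oword) : Prop :=
  match x with
  | Fin w => exists N, (forall i, N <= i -> f i = [::]) /\ w = flatten (mkseq f N)
  | Inf g => forall n, exists k,
      n < size (flatten (mkseq f k)) /\ g n = nth (g n) (flatten (mkseq f k)) n
  end.

Definition omega (L : lang) (x : oword) : Prop :=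
  exists f, (forall i, L (f i)) /\ concat_rel f x.

Definition pcat (u : seq S) (x : oword) : oword :=
  match x with
  | Fin v => Fin (u ++ v)
  | Inf h => Inf (fun n => nth (h (n - size u)) u n)
  end.

Definition omega_cat (C D : lang) (x : oword) : Prop :=
  exists u y, C u /\ omega D y /\ x = pcat u y.

Definition inC (p : lang * lang) : Prop :=
  isClass p.1 /\ isClass p.2 /\ cmul p.1 p.2 = p.1 /\ cmul p.2 p.2 = p.2.

Definition ff (V : oword -> Prop) : lang * lang -> Prop :=
  fun p => inC p /\ exists x, V x /\ omega_cat p.1 p.2 x.

Definition gg (VV : lang * lang -> Prop) : oword -> Prop :=
  fun x => exists p, VV p /\ omega_cat p.1 p.2 x.

Definition closed (VV : lang * lang -> Prop) : Prop :=
  forall p, ff (gg VV) p <-> VV p.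

Definition M_le_omega (VV : lang * lang -> Prop) : Prop := closed VV.

Definition M_star (UU : lang -> Prop) : Prop := forall C, UU C -> isClass C.

Definition setmul (UU : lang -> Prop) (VV : lang * lang -> Prop) : lang * lang -> Prop :=
  fun p => exists a c, UU a /\ VV (c, p.2) /\ p.1 = cmul a c.

End Defs.

(* Main.v *)
Require Import Defs.
From mathcomp Require Import all_boot.
From Stdlib Require Import FunctionalExtensionality PropExtensionality.
From mathcomp Require Import zify.
Set Implicit Arguments. Unset Strict Implicit.

Section Alg.
Variables (S : finType) (A : aut S).

Lemma reach_cat (p : st A) u v r :
  reachb p (u ++ v) r = [exists q, reachb p u q && reachb q v r].
Proof.
elim: u p => [|a u IH] p /=.
  apply/idP/existsP => [H|[q /andP[]]]; first by exists p; rewrite /reachb /= in_set1 eqxx.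
  by rewrite /reachb /= in_set1 => /eqP ->.
rewrite /reachb /=; apply/bigcupP/existsP.
  move=> [q Hq]; rewrite -/(reachb q (u ++ v) r) IH => /existsP [q' /andP[H1 H2]].
  exists q'; apply/andP; split => //; apply/bigcupP; by exists q.
move=> [q' /andP[/bigcupP [q Hq H1] H2]]; exists q => //.
rewrite -/(reachb q (u ++ v) r) IH; apply/existsP; exists q'; by rewrite /reachb H1.
Qed.

Lemma reachFP (p : st A) w q :
  reachFb p w q <-> exists w1 w2, w = w1 ++ w2 /\ exists q2, q2 \in fin A /\ reachb p w1 q2 /\ reachb q2 w2 q.
Proof.
split.
  move=> /existsP [i /existsP [q2 /and3P [H1 H2 H3]]].
  exists (take i w), (drop i w); split; first by rewrite cat_take_drop.
  by exists q2.
move=> [w1 [w2 [-> [q2 [H1 [H2 H3]]]]]].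
apply/existsP.
have Hi : size w1 < (size (w1 ++ w2)).+1 by rewrite size_cat ltnS leq_addr.
exists (Ordinal Hi); apply/existsP; exists q2; apply/and3P; split => //=.
  by rewrite take_size_cat.
by rewrite drop_size_cat.
Qed.

Lemma cat_split (u v w1 w2 : seq S) : u ++ v = w1 ++ w2 ->
  exists m, (u = w1 ++ m /\ w2 = m ++ v) \/ (w1 = u ++ m /\ v = m ++ w2).
Proof.
elim: u w1 => [|a u IH] w1 /=.
  by move=> ->; exists w1; right.
case: w1 => [|b w1] /=.
  by move=> <-; exists (a :: u); left.
move=> [-> /IH [m [[-> ->]|[-> ->]]]]; exists m; [left|right]; done.
Qed.

Lemma reachF_cat (p : st A) u v r :
  reachFb p (u ++ v) r = [exists q, reachFb p u q && reachb q v r] || [exists q, reachb p u q && reachFb q v r].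
Proof.
apply/idP/idP.
  move=> /reachFP [w1 [w2 [/cat_split [m [[E1 E2]|[E1 E2]]] [q2 [F [H1 H2]]]]]].
    subst; move: H2; rewrite reach_cat => /existsP [q /andP [H2 H3]].
    apply/orP; left; apply/existsP; exists q; rewrite H3 andbT.
    by apply/reachFP; exists w1, m; split=> //; exists q2.
  subst; move: H1; rewrite reach_cat => /existsP [q /andP [H1 H3]].
  apply/orP; right; apply/existsP; exists q; rewrite H1 /=.
  by apply/reachFP; exists m, w2; split=> //; exists q2.
case/orP => /existsP [q /andP [H1 H2]].
  move/reachFP: H1 => [w1 [w2 [-> [q2 [F [H3 H4]]]]]].
  apply/reachFP; exists w1, (w2 ++ v); split; first by rewrite catA.
  exists q2; split => //; split => //; rewrite reach_cat; apply/existsP; exists q; apply/andP; done.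
move/reachFP: H2 => [w1 [w2 [-> [q2 [F [H3 H4]]]]]].
apply/reachFP; exists (u ++ w1), w2; split; first by rewrite catA.
exists q2; split => //; split => //; rewrite reach_cat; apply/existsP; exists q; apply/andP; done.
Qed.

Definition sig_eq (w x : seq S) := ((w == [::]) = (x == [::])) /\
  forall p q : st A, reachb p w q = reachb p x q /\ reachFb p w q = reachFb p x q.

Lemma clsP w x : cls A w x <-> sig_eq w x.
Proof.
case: w => [|a w] /=.
  split; first by move=> ->.
  by case=> /esym/eqP.
split.
  move=> [_ [Hx H]]; split => //; by case: x Hx {H}.
move=> [Hx H]; split => //; split => //; by case: x Hx {H}.
Qed.

Lemma sig_refl w : sig_eq w w. Proof. by []. Qed.
Lemma sig_sym w x : sig_eq w x -> sig_eq x w.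
Proof. move=> [H1 H2]; split => // p q; by case: (H2 p q). Qed.
Lemma sig_trans w x y : sig_eq w x -> sig_eq x y -> sig_eq w y.
Proof.
move=> [H1 H2] [H3 H4]; split; first by rewrite H1.
move=> p q; case: (H2 p q) => -> ->; exact: H4.
Qed.

Lemma nil_cat (u v : seq S) : (u ++ v == [::]) = (u == [::]) && (v == [::]).
Proof. by case: u. Qed.

Lemma sig_cat u u' v v' : sig_eq u u' -> sig_eq v v' -> sig_eq (u ++ v) (u' ++ v').
Proof.
move=> [E1 H1] [E2 H2]; split; first by rewrite !nil_cat E1 E2.
move=> p r; split.
  rewrite !reach_cat; apply: eq_existsb => q.
  by case: (H1 p q) => -> _; case: (H2 q r) => -> _.
rewrite !reachF_cat; congr orb; apply: eq_existsb => q.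
  by case: (H1 p q) => _ ->; case: (H2 q r) => -> _.
by case: (H1 p q) => -> _; case: (H2 q r) => _ ->.
Qed.

Lemma cls_refl w : cls A w w. Proof. exact/clsP/sig_refl. Qed.

Lemma cls_eq w x : cls A w x -> cls A w = cls A x.
Proof.
move/clsP=> H; apply: functional_extensionality => y.
apply: propositional_extensionality; rewrite !clsP; split.
  exact: sig_trans (sig_sym H).
exact: sig_trans H.
Qed.

Lemma class_eq C w : isClass A C -> C w -> C = cls A w.
Proof. by move=> [c ->] /cls_eq. Qed.

Lemma cmul_cls u v : cmul A (cls A u) (cls A v) = cls A (u ++ v).
Proof.
apply: functional_extensionality => x; apply: propositional_extensionality; split.
  move=> [u' [v' [/clsP H1 [/clsP H2 /clsP H3]]]].
  exact/clsP/(sig_trans (sig_cat H1 H2) H3).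
move=> H; exists u, v; split; first exact: cls_refl.
by split; first exact: cls_refl.
Qed.

Lemma cmul_class C D : isClass A C -> isClass A D -> isClass A (cmul A C D).
Proof. by move=> [c ->] [d ->]; rewrite cmul_cls; exists (c ++ d). Qed.


Lemma P_add (f : nat -> seq S) k m : flatten (mkseq f (k + m)) =
  flatten (mkseq f k) ++ flatten (mkseq (fun i => f (k + i)) m).
Proof.
rewrite /mkseq iotaD map_cat flatten_cat add0n; congr (_ ++ _).
have -> : iota k m = iota (k + 0) m by rewrite addn0.
by rewrite iotaDl -map_comp.
Qed.

Lemma P_S (f : nat -> seq S) k : flatten (mkseq f k.+1) = flatten (mkseq f k) ++ f k.
Proof. by rewrite -addn1 P_add /= addn0 cats0. Qed.

Lemma concat_all (f : nat -> seq S) h : concat_rel f (Inf h) ->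
  forall k n d, n < size (flatten (mkseq f k)) -> h n = nth d (flatten (mkseq f k)) n.
Proof.
move=> Hc k n d Hn; case: (Hc n) => k' [Hn' E].
rewrite E (set_nth_default d) //.
case: (leqP k k') => Hkk.
  by rewrite -(subnKC Hkk) P_add nth_cat Hn.
by rewrite -(subnKC (ltnW Hkk)) P_add nth_cat Hn'.
Qed.

Lemma concat_tail (f : nat -> seq S) h K : concat_rel f (Inf h) ->
  concat_rel (fun i => f (K + i)) (Inf (fun n => h (size (flatten (mkseq f K)) + n))).
Proof.
move=> Hc n /=.
case: (Hc (size (flatten (mkseq f K)) + n)) => k [Hk _].
exists k.
have E := P_add f K k.
have Hs : size (flatten (mkseq f k)) <= size (flatten (mkseq f (K + k))).
  by rewrite addnC P_add size_cat leq_addr.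
have Hlt : size (flatten (mkseq f K)) + n < size (flatten (mkseq f (K + k))) by apply: leq_trans Hs.
have Hlt2 := Hlt.
move: Hlt; rewrite E size_cat ltn_add2l => Hlt; split => //.
rewrite (concat_all Hc (h (size (flatten (mkseq f K)) + n)) Hlt2).
rewrite E nth_cat ltnNge leq_addr /= addKn; exact: set_nth_default.
Qed.

Lemma pcat_Inf (u : seq S) h g : pcat u (Inf h) = Inf g ->
  forall d n, g n = if n < size u then nth d u n else h (n - size u).
Proof.
move=> [<-] d n /=; case: ifP => H; first exact: set_nth_default.
by rewrite nth_default // leqNgt H.
Qed.

Lemma pcat_assoc (u s : seq S) t : pcat u (pcat s (Inf t)) = pcat (u ++ s) (Inf t).
Proof.
rewrite /=; congr Inf; apply: functional_extensionality => n.
rewrite nth_cat size_cat; case: ifP => H; first exact: set_nth_default.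
rewrite nth_default; last by rewrite leqNgt H.
by rewrite subnDA.
Qed.

Lemma pcatE (s : seq S) t : pcat s (Inf t) = Inf (fun n => nth (t (n - size s)) s n).
Proof. by []. Qed.

Lemma inf_split (u v : seq S) hy h2 g f :
  pcat u (Inf hy) = Inf g -> pcat v (Inf h2) = Inf g -> concat_rel f (Inf h2) ->
  exists k s0, u ++ s0 = v ++ flatten (mkseq f k) /\
     Inf hy = pcat (s0 ++ f k) (Inf (fun n => h2 (size (flatten (mkseq f k.+1)) + n))).
Proof.
move=> Hu Hv Hc.
set d := g 0.
case: (Hc (size u)) => k [Hk _].
have pref : forall m n, n < size (v ++ flatten (mkseq f m)) ->
    g n = nth d (v ++ flatten (mkseq f m)) n.
  move=> m n Hn; rewrite (pcat_Inf Hv d) nth_cat; case: ifP => // Hnv.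
  apply: concat_all => //; move: Hn Hnv; rewrite size_cat; lia.
have Hus : size u <= size (v ++ flatten (mkseq f k)) by rewrite size_cat; lia.
set s0 := drop (size u) (v ++ flatten (mkseq f k)).
have Es0 : u ++ s0 = v ++ flatten (mkseq f k).
  suff Ht : take (size u) (v ++ flatten (mkseq f k)) = u by rewrite -{1}Ht cat_take_drop.
  apply: (@eq_from_nth _ d); first by rewrite size_takel.
  move=> i; rewrite size_takel // => Hi.
  rewrite nth_take // -pref; last by lia.
  by rewrite (pcat_Inf Hu d) Hi.
exists k, s0; split => //.
set s := s0 ++ f k.
have Es : u ++ s = v ++ flatten (mkseq f k.+1) by rewrite catA Es0 P_S catA.
set Pk1 := flatten (mkseq f k.+1) in Es *.
have Hsz : size u + size s = size v + size Pk1 by rewrite -!size_cat Es.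
rewrite pcatE; congr Inf; apply: functional_extensionality => n.
have Hy : hy n = g (size u + n) by rewrite (pcat_Inf Hu d) ltnNge leq_addr /= addKn.
rewrite Hy.
case: (ltnP n (size s)) => Hn.
  rewrite (pref k.+1 (size u + n)) -/Pk1; last by rewrite size_cat -/Pk1; lia.
  rewrite -Es nth_cat ltnNge leq_addr /= addKn; exact: set_nth_default.
rewrite nth_default // (pcat_Inf Hv d) ifF; last by apply/negbTE; rewrite -leqNgt; lia.
congr h2; lia.
Qed.

Lemma omega_fin D w : isClass A D -> omega D (Fin w) -> D = cls A [::] /\ w = [::].
Proof.
move=> HD [f [Hf [N [HN ->]]]].
have ED : D = cls A [::].
  apply: class_eq => //; rewrite -(HN N (leqnn N)); exact: Hf.
split => //.
have H0 : forall i, f i = [::] by move=> i; move: (Hf i); rewrite ED.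
rewrite /mkseq; elim: (iota 0 N) => //= i s ->; by rewrite H0.
Qed.

End Alg.

Theorem lemma10 (S : finType) (A : aut S)
  (UU : lang S -> Prop) (VV : lang S * lang S -> Prop) :
  M_star A UU -> M_le_omega A VV -> M_le_omega A (setmul A UU VV).
Proof.
move=> HU HV [C D]; split.
- move=> [[HC [HD [HCD HDD]]] [x [[[P1 P2] [[a [c' [Ha [Hc' E1]]]] [u [y [Hu [Hy Ex]]]]]] [v [y2 [Hv [Hy2 Ex2]]]]]]].
  simpl in *.
  have Hca := HU a Ha.
  have [[Hc'c [HP2 _]] _] := proj2 (HV (c', P2)) Hc'.
  simpl in *.
  have HP1 : isClass A P1 by rewrite E1; apply: cmul_class.
  case: x Ex Ex2 => [w|g] Ex Ex2.
  + case: y Ex Hy => [wy|hy] // Ex Hy; case: y2 Ex2 Hy2 => [wy2|h2] // Ex2 Hy2.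
    case: (omega_fin HP2 Hy) => EP2 Ewy; case: (omega_fin HD Hy2) => ED Ewy2.
    move: Ex Ex2; rewrite Ewy Ewy2 /= !cats0 => [[Ew]] [Ew2].
    exists a, c'; split => //; split; first by rewrite /= ED -EP2.
    rewrite /= -E1 (class_eq HC Hv) (class_eq HP1 Hu) -Ew Ew2 //.
  + case: y Ex Hy => [wy|hy] // Ex Hy; case: y2 Ex2 Hy2 => [wy2|h2] // Ex2 Hy2.
    have Hy2' := Hy2.
    move: Hy2' => [f [Hf Hcf]].
    have [k [s0 [Es0 Ey]]] := inf_split (esym Ex) (esym Ex2) Hcf.
    move: Hu; rewrite E1 => -[u0 [u1 [Hu0 [Hu1 Hu01]]]].
    set C3 := cls A (u1 ++ (s0 ++ f k)).
    have EDf : forall i, D = cls A (f i) by move=> i; apply: class_eq.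
    have EC' : C = cls A v by apply: class_eq.
    have ECm : forall m, cls A (v ++ flatten (mkseq f m)) = C.
      elim => [|m IH]; first by rewrite cats0.
      by rewrite P_S catA -cmul_cls IH -EDf.
    have HC3D : cmul A C3 D = C3.
      have Hkk : cls A (f k ++ f k) = cls A (f k) by rewrite -cmul_cls -EDf HDD.
      have E2 : (u1 ++ (s0 ++ f k)) ++ f k = (u1 ++ s0) ++ (f k ++ f k) by rewrite !catA.
      by rewrite /C3 (EDf k) cmul_cls E2 -cmul_cls Hkk cmul_cls -catA.
    have HVC3 : VV (C3, D).
      apply/(HV (C3, D)); split.
        split; first by exists (u1 ++ (s0 ++ f k)).
        by split.
      exists (pcat u1 (Inf hy)); split.
        by exists (c', P2); split => //; exists u1, (Inf hy).
      exists (u1 ++ (s0 ++ f k)), (Inf (fun n => h2 (size (flatten (mkseq f k.+1)) + n))).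
      split; first exact: cls_refl.
      split; first by exists (fun i => f (k.+1 + i)); split; [move=> i; exact: Hf | exact: concat_tail].
      by rewrite Ey pcat_assoc.
    exists a, C3; split => //; split => //=.
    rewrite (class_eq Hca Hu0) /C3 cmul_cls catA -cmul_cls (cls_eq Hu01) cmul_cls.
    by rewrite catA Es0 -catA -P_S ECm.
- move=> [a [c [Ha [Hc E1]]]] /=; simpl in E1.
  have [[Hcc [HD' [Hcd Hdd]]] [x [_ [u [y [Hu [Hy Ex]]]]]]] := proj2 (HV (c, D)) Hc.
  simpl in *.
  have [a0 Ea] := HU a Ha.
  split.
    rewrite /inC /=; split; first by rewrite E1; apply: cmul_class => //; exact: HU.
    split; first done. split; last done.
    case: Hcc => c0 Ec; case: HD' => d0 Ed.
    have Hcd' : cls A (c0 ++ d0) = cls A c0 by rewrite -cmul_cls -Ec -Ed.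
    by rewrite E1 Ea Ec Ed !cmul_cls -catA -cmul_cls Hcd' cmul_cls.
  have Hw : cmul A a c (a0 ++ u).
    by exists a0, u; rewrite Ea; split; [exact: cls_refl | split => //; exact: cls_refl].
  exists (pcat (a0 ++ u) y); split.
    exists (C, D); split; first by exists a, c.
    by exists (a0 ++ u), y; rewrite /= E1.
  by exists (a0 ++ u), y; rewrite /= E1.
Qed.
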